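(* Let $m \equiv 3 \pmod 4$ with $m > 3$, $n = 3^m - 1$, $v = (3^{(m+1)/2}+1)/2$ and $\delta = (3^{(m-1)/2}+7)/2$. Then $\gcd(v,n) = 1$, and, setting $T_{(0,3,m)}(v) = \{ vi \bmod n : i \in T_{(0,3,m)}\}$, we have $\{1, 2, \ldots, \delta-1\} \subseteq T_{(0,3,m)}(v)$.
   Context: For an integer $0 \le j \le n-1$ with $3$-adic expansion $j = \sum_{t=0}^{m-1} j_t 3^t$, $j_t \in \{0,1,2\}$, let $w_3(j) = \sum_{t=0}^{m-1} j_t$. For distinct $i_1,i_2 \in \{0,1,2,3\}$, $T_{(i_1,i_2,m)} = \{1 \le j \le n-1 : w_3(j) \equiv i_1 \text{ or } i_2 \pmod 4\}$. For an integer $b$, $b \bmod n$ is the unique $b_0 \in \{0,\ldots,n-1\}$ with $b \equiv b_0 \pmod n$. *)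

(* Defs.v *)
From mathcomp Require Import all_boot.
Set Implicit Arguments. Unset Strict Implicit. Unset Printing Implicit Defensive.

Definition w3 (m j : nat) : nat := \sum_(t < m) ((j %/ 3 ^ t) %% 3).

Definition inT (i1 i2 m j : nat) : bool :=
  [&& 1 <= j, j <= (3 ^ m - 1) - 1 &
      (w3 m j %% 4 == i1 %% 4) || (w3 m j %% 4 == i2 %% 4)].

(* Main.v *)
Require Import Defs.
From mathcomp Require Import all_boot zify.

Lemma w3S r j : w3 r.+1 j = j %% 3 + w3 r (j %/ 3).
Proof.
rewrite /w3 big_ord_recl /= expn0 divn1; congr (_ + _).
by apply: eq_bigr => t _; rewrite /bump /= expnS divnMA.
Qed.

Lemma w3_0 j : w3 0 j = 0.
Proof. by rewrite /w3 big_ord0. Qed.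

Lemma w3_split s r a b : b < 3 ^ s -> w3 (s + r) (a * 3 ^ s + b) = w3 s b + w3 r a.
Proof.
elim: s b => [|s IH] b hb.
  rewrite expn0 in hb; have -> : b = 0 by lia.
  by rewrite expn0 muln1 addn0 add0n w3_0.
rewrite addSn !w3S expnS.
set Y := 3 ^ s in hb *.
have E1 : (a * (3 * Y) + b) %% 3 = b %% 3 by lia.
have E2 : (a * (3 * Y) + b) %/ 3 = a * Y + b %/ 3 by lia.
rewrite E1 E2 IH; first lia.
rewrite expnS in hb; lia.
Qed.

Lemma w3_compl r y : y < 3 ^ r -> w3 r y + w3 r (3 ^ r - 1 - y) = 2 * r.
Proof.
elim: r y => [|r IH] y hy; first by rewrite !w3_0.
rewrite !w3S expnS in hy *.
set Y := 3 ^ r in hy IH *.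
have E1 : (3 * Y - 1 - y) %% 3 = 2 - y %% 3 by lia.
have E2 : (3 * Y - 1 - y) %/ 3 = Y - 1 - y %/ 3 by lia.
rewrite E1 E2.
have := IH (y %/ 3) (ltac:(lia)); lia.
Qed.

Lemma w3_bal r p k : 2 * p + 1 = 3 ^ r -> k <= p ->
  w3 r (p + k) + w3 r (p - k) = 2 * r.
Proof.
elim: r p k => [|r IH] p k hp hk.
  by rewrite !w3_0.
rewrite !w3S. rewrite expnS in hp.
set Y := 3 ^ r in hp IH.
have hp' : 2 * (p %/ 3) + 1 = Y by lia.
case: (ltnP (k %% 3) 2) => he.
  have E1 : (p + k) %/ 3 = p %/ 3 + k %/ 3 by lia.
  have E2 : (p - k) %/ 3 = p %/ 3 - k %/ 3 by lia.
  rewrite E1 E2.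
  have := IH (p %/ 3) (k %/ 3) hp' (ltac:(lia)); lia.
have E1 : (p + k) %/ 3 = p %/ 3 + (k %/ 3 + 1) by lia.
have E2 : (p - k) %/ 3 = p %/ 3 - (k %/ 3 + 1) by lia.
rewrite E1 E2.
have := IH (p %/ 3) (k %/ 3 + 1) hp' (ltac:(lia)); lia.
Qed.

Theorem lemma2 (m : nat) (hm4 : m %% 4 = 3) (hm : 3 < m) :
  let n := 3 ^ m - 1 in
  let v := (3 ^ ((m + 1) %/ 2) + 1) %/ 2 in
  let delta := (3 ^ ((m - 1) %/ 2) + 7) %/ 2 in
  gcdn v n = 1 /\
  (forall k, 1 <= k <= delta - 1 ->
     exists2 i, inT 0 3 m i & k = (v * i) %% n).
Proof.
move=> n v delta; rewrite /n /v /delta {n v delta}.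
set a := m %/ 4.
have Em : m = 4 * a + 3 by lia.
rewrite /inT Em.
have -> : (4 * a + 3 + 1) %/ 2 = 2 * a + 2 by lia.
have -> : (4 * a + 3 - 1) %/ 2 = 2 * a + 1 by lia.
have H9 : 9 ^ a %% 4 = 1 by rewrite -modnXm (_ : 9 %% 4 = 1) // exp1n.
have HL4 : 3 ^ (2 * a + 1) %% 4 = 3.
  by rewrite addn1 expnS expnM; move: H9; set X := 9 ^ a; lia.
set b := 3 ^ (2 * a + 1) %/ 4.
have HL : 3 ^ (2 * a + 1) = 4 * b + 3 by lia.
have hb6 : 6 <= b.
  have : 3 ^ 3 <= 3 ^ (2 * a + 1) by rewrite leq_exp2l //; lia.
  rewrite HL /=; lia.
have HH : 3 ^ (2 * a + 2) = 12 * b + 9 by rewrite addnS expnS HL; lia.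
have Hm : 3 ^ (4 * a + 3) = 3 * (4 * b + 3) * (4 * b + 3).
  rewrite (_ : 4 * a + 3 = (2 * a + 1) + (2 * a + 2)); last lia.
  rewrite expnD HL HH; nia.
have Hn : 3 ^ (4 * a + 3) - 1 = 48 * b * b + 72 * b + 26 by rewrite Hm; nia.
have Hv : (12 * b + 9 + 1) %/ 2 = 6 * b + 5 by lia.
have Hd : (4 * b + 3 + 7) %/ 2 - 1 = 2 * b + 4 by lia.
rewrite Hn HH Hv HL Hd.
have Ew : 4 * a + 3 = (2 * a + 2) + (2 * a + 1) by lia.
split.
  set d := gcdn _ _.
  have d2 : d %| 2.
    have h1 : d %| (6 * b + 5) * (12 * b + 8) * 2.
      by rewrite dvdn_mulr // dvdn_mulr // dvdn_gcdl.
    have h2 : d %| (48 * b * b + 72 * b + 26) * 3 by rewrite dvdn_mulr // dvdn_gcdr.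
    have E : (6 * b + 5) * (12 * b + 8) * 2 = (48 * b * b + 72 * b + 26) * 3 + 2 by nia.
    by rewrite E (dvdn_addr 2 h2) in h1.
  have dv : d %| 6 * b + 5 by apply: dvdn_gcdl.
  have dpos : 0 < d by rewrite gcdn_gt0; lia.
  have := dvdn_leq (isT : 0 < 2) d2.
  case: d d2 dv dpos => [|[|[|d]]] //= _ dv _ _. lia.
move=> k /andP [k1 k2].
case: (boolP (odd k)) => hk; last first.
  exists (k * (12 * b + 8)).
    apply/and3P; split; [nia | nia |].
    have Ei : k * (12 * b + 8) = (k - 1) * 3 ^ (2 * a + 2) + (3 ^ (2 * a + 2) - 1 - (k - 1)).
      rewrite HH; nia.
    rewrite Ei Ew w3_split; last by rewrite HH; lia.
    have E2 : w3 (2 * a + 1) (k - 1) = w3 (2 * a + 2) (k - 1).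
      have h := @w3_split (2 * a + 1) 1 0 (k - 1) (ltac:(rewrite HL; lia)).
      rewrite mul0n add0n in h.
      have -> : 2 * a + 2 = 2 * a + 1 + 1 by lia.
      rewrite h (_ : w3 1 0 = 0) ?addn0 //.
      by rewrite w3S w3_0.
    rewrite E2 addnC w3_compl; last by rewrite HH; lia.
    apply/orP; left; apply/eqP; lia.
  have -> : (6 * b + 5) * (k * (12 * b + 8)) = (3 * (k %/ 2)) * (48 * b * b + 72 * b + 26) + k.
    have -> : k = 2 * (k %/ 2) by lia.
    set c := k %/ 2; rewrite -/c; nia.
  rewrite modnMDl modn_small //; nia.
case: (leqP k (2 * b + 1)) => hkP.
  set P := 2 * b + 1.
  exists ((P + k) * (12 * b + 9) + (4 * b + 3) + (P - k)).
    apply/and3P; split; [nia | nia |].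
    rewrite -HH -HL -addnA Ew w3_split; last by rewrite HH; lia.
    have -> : 2 * a + 2 = 2 * a + 1 + 1 by lia.
    rewrite -[3 ^ (2 * a + 1)]mul1n.
    rewrite w3_split; last by rewrite HL; lia.
    rewrite (_ : w3 1 1 = 1); last by rewrite w3S w3_0.
    have := @w3_bal (2 * a + 1) P k (ltac:(rewrite HL; lia)) hkP.
    move=> hb; apply/orP; right; apply/eqP; lia.
  have -> : (6 * b + 5) * ((P + k) * (12 * b + 9) + (4 * b + 3) + (P - k))
      = (3 * b + 3 * (k %/ 2) + 4) * (48 * b * b + 72 * b + 26) + k.
    have -> : k = 2 * (k %/ 2) + 1 by lia.
    set e := k %/ 2; rewrite -/e /P.
    have [d ->] : exists d, b = e + d by exists (b - e); lia.
    nia.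
  rewrite modnMDl modn_small //; nia.
have hk' : k = 2 * b + 3 by lia.
exists (16 * b + 11).
  apply/and3P; split; [nia | nia |].
  have -> : 16 * b + 11 = 3 * 3 ^ (2 * a + 1) + (3 ^ (2 * a + 1) - 1) by rewrite HL; lia.
  rewrite (_ : 4 * a + 3 = 2 * a + 1 + (2 * a + 2)); last lia.
  rewrite w3_split; last by rewrite HL; lia.
  have := @w3_compl (2 * a + 1) 0 (ltac:(rewrite HL; lia)).
  rewrite subn0 (_ : w3 (2 * a + 1) 0 = 0); last first.
    rewrite /w3; apply: big1 => i _; by rewrite div0n.
  rewrite add0n => ->.
  have -> : 2 * a + 2 = (2 * a).+2 by lia.
  rewrite !w3S.
  have -> : w3 (2 * a) (3 %/ 3 %/ 3) = 0 by rewrite /w3; apply: big1 => i _; rewrite div0n.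
  apply/orP; right; apply/eqP; lia.
rewrite hk'.
have -> : (6 * b + 5) * (16 * b + 11) = 2 * (48 * b * b + 72 * b + 26) + (2 * b + 3) by nia.
rewrite modnMDl modn_small //; nia.
Qed.
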